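(* Let $f\in\mathbb{C}[x_0,\dots,x_3]_4$ be a quaternary quartic form that is not apolar to any quadric, and let $\Gamma\subset\mathbb{P}^3$ be a scheme of length ten apolar to $f$. Then $\Gamma$ imposes independent conditions on cubics, i.e. $I_{\Gamma,3}$ is $10$-dimensional.
   Context: $T=\mathbb{C}[y_0,\dots,y_3]$ acts on $S=\mathbb{C}[x_0,\dots,x_3]$ by differentiation; $f^\perp=\{g\in T:g(f)=0\}$; ''not apolar to any quadric'' means $f^\perp_2=0$. $\mathbb{P}^3=\mathbb{P}(S_1)$ has coordinate ring $T$, and $\Gamma$ is apolar to $f$ if its saturated ideal $I_\Gamma\subset f^\perp$. *)

(* Defs.v *)
From HB Require Import structures.
From mathcomp Require Import all_boot all_order all_algebra.
From mathcomp Require Import Rstruct complex.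
From mathcomp Require Import mpoly.


Set Implicit Arguments.
Unset Strict Implicit.
Unset Printing Implicit Defensive.

Import GRing.Theory.
Local Open Scope ring_scope.

Definition CC : Type := complex Rdefinitions.R.

(* Polynomial rings in 4 variables: S = C[x_0..x_3] and T = C[y_0..y_3];
   both are modeled by {mpoly CC[4]}. *)
Notation poly4 := {mpoly CC[4]}.

(* Apolarity action of T on S by differentiation:
   g(f) = sum_m g_m * d^m f / dx^m  (y_i acts as d/dx_i). *)
Definition apply_diff (g f : poly4) : poly4 :=
  \sum_(m <- msupp g) g@_m *: mderivm m f.

Definition hpart (d : nat) (p : poly4) : poly4 :=
  \sum_(m <- msupp p | mdeg m == d) p@_m *: 'X_[m].

Definition homog_ideal (I : poly4 -> Prop) : Prop :=
  [/\ I 0,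
      (forall p q, I p -> I q -> I (p + q)),
      (forall r p, I p -> I (r * p)) &
      (forall p d, I p -> I (hpart d p))].

(* I is saturated with respect to the irrelevant ideal (y_0,...,y_3):
   (I : m^oo) = I. *)
Definition saturated (I : poly4 -> Prop) : Prop :=
  forall g, (exists N : nat, forall i : 'I_4, I ('X_i ^+ N * g)) -> I g.

Definition lin_indep (k : nat) (v : 'I_k -> poly4) : Prop :=
  forall c : 'I_k -> CC, \sum_(i < k) c i *: v i = 0 -> forall i, c i = 0.

Definition dim_deg (I : poly4 -> Prop) (d k : nat) : Prop :=
  (exists v : 'I_k -> poly4,
      (forall i, I (v i) /\ v i \is d.-homog) /\ lin_indep v) /\
  (forall v : 'I_k.+1 -> poly4,
      (forall i, I (v i) /\ v i \is d.-homog) -> ~ lin_indep v).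

(* Hilbert function: dim_C (T_d / I_d) = k, witnessed by k forms of degree d
   whose classes form a basis of T_d / I_d. *)
Definition hilb (I : poly4 -> Prop) (d k : nat) : Prop :=
  exists g : 'I_k -> poly4,
    [/\ (forall i, g i \is d.-homog),
        (forall p, p \is d.-homog ->
           exists (c : 'I_k -> CC) (q : poly4),
             I q /\ p = q + \sum_(i < k) c i *: g i) &
        (forall c : 'I_k -> CC, I (\sum_(i < k) c i *: g i) -> forall i, c i = 0)].

(* I is the saturated homogeneous ideal I_Gamma of a subscheme Gamma of P^3
   (= Proj T) of length len, i.e. a zero-dimensional scheme whose Hilbert
   polynomial is the constant len. *)
Definition scheme_ideal_of_length (I : poly4 -> Prop) (len : nat) : Prop :=
  [/\ homog_ideal I, saturated I &
      exists d0 : nat, forall d : nat, leq d0 d -> hilb I d len].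

(* Main.v *)
Require Import Defs.
From HB Require Import structures.
From mathcomp Require Import all_boot all_order all_algebra all_field.
From mathcomp Require Import Rstruct complex.
From mathcomp Require Import mpoly.
From Stdlib Require Import Classical ClassicalEpsilon.
From mathcomp Require Import zify.
Import GRing.Theory.
Local Open Scope ring_scope.

Set Implicit Arguments.
Unset Strict Implicit.
Unset Printing Implicit Defensive.

Definition lin (x : 'rV[CC]_4) : poly4 := \sum_(i < 4) x 0 i *: 'X_i.

Lemma linD x y : lin (x + y) = lin x + lin y.
Proof. by rewrite /lin -big_split; apply: eq_bigr => i _; rewrite mxE scalerDl. Qed.

Lemma linZ c x : lin (c *: x) = c *: lin x.
Proof. by rewrite /lin scaler_sumr; apply: eq_bigr => i _; rewrite mxE scalerA. Qed.

Lemma lin0 : lin 0 = 0.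
Proof. by rewrite /lin big1 // => i _; rewrite mxE scale0r. Qed.

Lemma lin_sum k (F : 'I_k -> 'rV[CC]_4) : lin (\sum_i F i) = \sum_i lin (F i).
Proof.
elim/big_rec2: _ => [|i y1 y2 _ <-]; first exact: lin0.
by rewrite linD.
Qed.

Lemma lin_delta (i : 'I_4) : lin (delta_mx 0 i) = 'X_i.
Proof.
rewrite /lin (bigD1 i) //= big1 ?addr0; first by rewrite mxE !eqxx scale1r.
by move=> j ji; rewrite mxE eqxx /= (negbTE ji) scale0r.
Qed.

Lemma lin_homog x : lin x \is 1.-homog.
Proof.
rewrite rpred_sum // => i _; apply: rpredZ.
by rewrite dhomogX /= mdeg1.
Qed.

Section Ideal.
Variable I : poly4 -> Prop.
Hypothesis HI : homog_ideal I.

Lemma I0 : I 0. Proof. by case: HI. Qed.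
Lemma ID p q : I p -> I q -> I (p + q). Proof. by case: HI => _ h _ _; apply: h. Qed.
Lemma IM r p : I p -> I (r * p). Proof. by case: HI => _ _ h _; apply: h. Qed.
Lemma IMr r p : I p -> I (p * r). Proof. by rewrite mulrC; apply: IM. Qed.
Lemma IZ c p : I p -> I (c *: p). Proof. by rewrite -mul_mpolyC; apply: IM. Qed.
Lemma IN p : I p -> I (- p). Proof. by rewrite -scaleN1r; apply: IZ. Qed.
Lemma IB p q : I p -> I q -> I (p - q). Proof. by move=> hp hq; apply: ID => //; apply: IN. Qed.
Lemma Isum k (F : 'I_k -> poly4) : (forall i, I (F i)) -> I (\sum_i F i).
Proof. by move=> h; elim/big_ind: _ => //; [exact: I0 | exact: ID]. Qed.
Lemma IZinv c p : c != 0 -> I (c *: p) -> I p.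
Proof. by move=> c0 h; rewrite -[p](scalerK c0); apply: IZ. Qed.

End Ideal.

Definition Kill (I : poly4 -> Prop) (A : 'M[CC]_4) (z : poly4) :=
  forall x : 'rV_4, (x <= A)%MS -> I (lin x * z).

Section KillSec.
Variable I : poly4 -> Prop.
Hypothesis HI : homog_ideal I.
Hypothesis Hsat : saturated I.

Lemma kill_mul A z t : Kill I A z -> Kill I A (t * z).
Proof. by move=> h x /h hx; rewrite mulrCA; apply: IM. Qed.

Lemma kill_sub A B z : Kill I A z -> (B <= A)%MS -> Kill I B z.
Proof. by move=> h sBA x sxB; apply: h; apply: submx_trans sBA. Qed.

Lemma kill_adds A (w : 'rV_4) z : Kill I A z -> I (lin w * z) -> Kill I (A + w)%MS z.
Proof.
move=> hA hw x /sub_addsmxP [[u1 u2] /= ->].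
rewrite linD mulrDl; apply: ID => //.
  by apply: hA; apply: submxMl.
rewrite [u2]mx11_scalar mul_scalar_mx linZ -scalerAl; exact: IZ.
Qed.

Lemma kill_full A z : Kill I A z -> row_full A -> I z.
Proof.
move=> hA full; apply: Hsat; exists 1%N => i; rewrite expr1 -lin_delta.
apply: hA; apply: submx_trans (submx1 _ ) _; by rewrite sub1mx.
Qed.

Lemma rank_adds_gt (A : 'M[CC]_4) (w : 'rV_4) : ~~ (w <= A)%MS -> (\rank A < \rank (A + w)%MS)%N.
Proof.
move=> nw; have := mxrank_leqif_sup (addsmxSl A w).
by rewrite addsmx_sub submx_refl /= (negbTE nw) => /ltn_leqif.
Qed.

Lemma rank_adds_le (A : 'M[CC]_4) (w : 'rV_4) : (\rank (A + w)%MS <= (\rank A).+1)%N.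
Proof.
apply: leq_trans (mxrank_adds_leqif A w : (_ <= _)%N) _.
by rewrite -[X in (_ <= X)%N]addn1 leq_add2l rank_leq_row.
Qed.

Lemma rank_le4 (A : 'M[CC]_4) : (\rank A <= 4)%N.
Proof. exact: rank_leq_col. Qed.

Lemma pt_prime A z w : Kill I A z -> \rank A = 3%N -> ~ I z -> ~~ (w <= A)%MS ->
  ~ I (lin w * z).
Proof.
move=> hA rA nz nw hw; apply: nz; apply: (kill_full (kill_adds hA hw)).
have := rank_adds_gt nw; rewrite rA /row_full => h.
by rewrite eqn_leq rank_le4 h.
Qed.

Lemma pt_prime_kill A z w : Kill I A z -> Kill I A (lin w * z).
Proof. exact: kill_mul. Qed.

End KillSec.

Section DepSec.
Variable I : poly4 -> Prop.
Hypothesis HI : homog_ideal I.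
Variable d0 : nat.
Hypothesis Hh : forall d, (d0 <= d)%N -> hilb I d 10.

Lemma nonzero_row m n (K : 'M[CC]_(m, n)) : K != 0 -> exists i, row i K != 0.
Proof.
move=> nK; apply/not_all_not_ex => h; move/eqP: nK; apply.
by apply/row_matrixP => i; rewrite row0; move/negP: (h i); rewrite negbK => /eqP ->.
Qed.

Lemma nonzero_entry n (x : 'rV[CC]_n) : x != 0 -> exists j, x 0 j != 0.
Proof.
move=> nx; apply/not_all_not_ex => h; move/eqP: nx; apply.
apply/matrixP => i j; rewrite ord1 mxE; move/negP: (h j); rewrite negbK => /eqP -> /=; by [].
Qed.

Lemma dep D n (s : 'I_n -> poly4) : (d0 <= D)%N -> (10 < n)%N ->
  (forall k, s k \is D.-homog) ->
  exists c : 'I_n -> CC, (exists i, c i != 0) /\ I (\sum_k c k *: s k).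
Proof.
move=> hD hn hs; case: (Hh hD) => g [hg hspan hind].
have: forall k, exists cq : ('I_10 -> CC) * poly4,
    I cq.2 /\ s k = cq.2 + \sum_(i < 10) cq.1 i *: g i.
  move=> k; case: (hspan _ (hs k)) => c [q [hq e]]; by exists (c, q).
case/fin_all_exists => F hF.
pose M := \matrix_(k < n, j < 10) (F k).1 j.
have nf : ~~ row_free M.
  rewrite /row_free; apply/negP => /eqP e.
  by have := rank_leq_col M; rewrite e => /(leq_ltn_trans) /(_ hn); rewrite ltnn.
have : kermx M != 0 by rewrite kermx_eq0.
case/nonzero_row => i nx; set x := row i (kermx M) in nx.
have xM : x *m M = 0 by rewrite /x -row_mul mulmx_ker row0.
exists (fun k => x 0 k); split; first exact: nonzero_entry.
have -> : \sum_k x 0 k *: s k =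
   \sum_k x 0 k *: (F k).2 + \sum_(j < 10) (x *m M) 0 j *: g j.
  under eq_bigr => k _ do rewrite {1}(proj2 (hF k)) scalerDr.
  rewrite big_split /=; congr (_ + _).
  under [RHS]eq_bigr => j _ do rewrite mxE scaler_suml.
  rewrite exchange_big /=; apply: eq_bigr => k _ /=.
  by rewrite scaler_sumr; apply: eq_bigr => j _; rewrite /M !mxE scalerA.
rewrite xM; apply: ID => //.
  by apply: (Isum HI) => k; apply: (IZ HI); case: (hF k).
by apply: (Isum HI) => j; rewrite mxE scale0r; apply: (I0 HI).
Qed.

End DepSec.

Section BinForm.
Variables u v : poly4.

Definition bform j (p : {poly CC}) : poly4 :=
  \sum_(i < j.+1) p`_i *: (u ^+ i * v ^+ (j - i)).

Lemma H_homog j p : u \is 1.-homog -> v \is 1.-homog -> bform j p \is j.-homog.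
Proof.
move=> hu hv; rewrite rpred_sum // => i _; apply: rpredZ.
have := dhomogM (dhomogMn i hu) (dhomogMn (j - i) hv).
by rewrite !mul1n subnKC // -ltnS.
Qed.

Lemma H_sub j p q : bform j (p - q) = bform j p - bform j q.
Proof.
by rewrite /bform -sumrB; apply: eq_bigr => i _; rewrite coefB scalerBl.
Qed.

Lemma H_scale j q c : bform j (q * c%:P) = c *: bform j q.
Proof.
by rewrite /bform scaler_sumr; apply: eq_bigr => i _; rewrite coefMC scalerA mulrC.
Qed.

Lemma H_v j (p : {poly CC}) : (size p <= j.+1)%N -> bform j.+1 p = v * bform j p.
Proof.
move=> hs; rewrite /bform big_ord_recr /= nth_default // scale0r addr0.
rewrite mulr_sumr; apply: eq_bigr => i _ /=.
rewrite subSn; last by rewrite -ltnS.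
by rewrite exprS mulrCA scalerAr.
Qed.

Lemma H_X j q : bform j.+1 (q * 'X) = u * bform j q.
Proof.
rewrite /bform big_ord_recl /= coefMX eqxx scale0r add0r mulr_sumr.
apply: eq_bigr => i _ /=; rewrite coefMX /= subSS.
by rewrite exprS -mulrA scalerAr.
Qed.

Lemma H0 p : bform 0 p = p`_0 *: 1.
Proof. by rewrite /bform big_ord1 /= expr0 mulr1. Qed.

Lemma H_factor j (p : {poly CC}) : p != 0 -> (size p <= j.+2)%N ->
  exists (a b : CC) (q : {poly CC}), [/\ (a != 0) || (b != 0), q != 0, (size q <= j.+1)%N &
    bform j.+1 p = (a *: u + b *: v) * bform j q].
Proof.
move=> p0 hs; case: (leqP (size p) j.+1) => hs1.
  exists 0, 1, p; split => //; first by rewrite oner_neq0 orbT.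
  by rewrite H_v // scale0r add0r scale1r.
have sz : size p = j.+2 by apply/eqP; rewrite eqn_leq hs hs1.
have : size p != 1%N by rewrite sz.
case/closed_rootP => r /factor_theorem [q eq].
have q0 : q != 0 by apply: contraNneq p0 => q0; rewrite eq q0 mul0r.
have szq : size q = j.+1.
  by move: sz; rewrite eq size_Mmonic ?monicXsubC // size_XsubC addn2 => -[].
exists 1, (- r), q; split => //; first by rewrite oner_neq0.
  by rewrite szq.
rewrite eq mulrBr H_sub H_X H_scale H_v ?szq //.
by rewrite scale1r mulrDl scaleNr mulNr -scalerAl.
Qed.

End BinForm.

Section BinSec.
Variable I : poly4 -> Prop.
Hypothesis HI : homog_ideal I.
Variable d0 : nat.
Hypothesis Hh : forall d, (d0 <= d)%N -> hilb I d 10.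

Lemma bin_rec u v j : forall (p : {poly CC}) z, p != 0 -> (size p <= j.+1)%N ->
  I (bform u v j p * z) -> ~ I z ->
  exists (a b : CC) j' (q : {poly CC}), [/\ (a != 0) || (b != 0),
     ~ I (bform u v j' q * z) & I ((a *: u + b *: v) * (bform u v j' q * z))].
Proof.
elim: j => [|j IH] p z p0 hs hI nz.
  exfalso; apply: nz; move: hI; rewrite H0 -scalerAl mul1r; apply: (IZinv HI).
  by apply: contraNneq p0 => h; rewrite (size1_polyC hs) h.
have [a [b [q [ab q0 hq e]]]] := H_factor u v p0 hs.
move: hI; rewrite e -mulrA => hI.
case: (classic (I (bform u v j q * z))) => hq'.
  exact: (IH q z q0 hq hq' nz).
by exists a, b, j, q.
Qed.

Lemma bin u v z e : u \is 1.-homog -> v \is 1.-homog -> z \is e.-homog -> ~ I z ->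
  exists (a b : CC) t k, [/\ (a != 0) || (b != 0), t \is k.-homog,
     ~ I (t * z) & I ((a *: u + b *: v) * (t * z))].
Proof.
move=> hu hv hz nz.
pose J := (d0 + 10)%N.
pose s := fun i : 'I_J.+1 => u ^+ i * v ^+ (J - i) * z.
have hs : forall i, s i \is (J + e).-homog.
  move=> i; apply: dhomogM => //.
  have := dhomogM (dhomogMn i hu) (dhomogMn (J - i) hv).
  by rewrite !mul1n subnKC // -ltnS.
have hD : (d0 <= J + e)%N by rewrite /J -addnA leq_addr.
have hn : (10 < J.+1)%N by rewrite ltnS /J leq_addl.
have [c [[i0 ci0] hc]] := dep HI Hh hD hn hs.
pose p := \poly_(i < J.+1) c (inord i).
have p0 : p != 0.
  apply/eqP => /(congr1 (fun q : {poly CC} => q`_i0)).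
  rewrite coef_poly ltn_ord inord_val coef0 => /eqP; exact/negP.
have sp : (size p <= J.+1)%N by apply: size_poly.
have ep : bform u v J p * z = \sum_i c i *: s i.
  rewrite /bform mulr_suml; apply: eq_bigr => i _.
  by rewrite coef_poly ltn_ord inord_val -scalerAl.
have [a [b [j' [q [ab nq hq]]]]] : exists (a b : CC) j' (q : {poly CC}), [/\ (a != 0) || (b != 0),
     ~ I (bform u v j' q * z) & I ((a *: u + b *: v) * (bform u v j' q * z))].
  by apply: bin_rec p0 sp _ nz; rewrite ep.
exists a, b, (bform u v j' q), j'; split => //.
exact: H_homog.
Qed.
End BinSec.

Notation ev i := (delta_mx 0 i : 'rV[CC]_4).

Lemma unit_notin (A : 'M[CC]_4) : (\rank A < 4)%N -> exists i : 'I_4, ~~ (ev i <= A)%MS.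
Proof.
move=> hr; apply/not_all_not_ex => h.
have : row_full A.
  rewrite -sub1mx; apply/row_subP => i; rewrite row1.
  by move/negP: (h i); rewrite negbK.
by rewrite /row_full => /eqP e; move: hr; rewrite e ltnn.
Qed.

Section PointSec.
Variable I : poly4 -> Prop.
Hypothesis HI : homog_ideal I.
Hypothesis Hsat : saturated I.
Variable d0 : nat.
Hypothesis Hh : forall d, (d0 <= d)%N -> hilb I d 10.

Lemma point_step A z e : Kill I A z -> z \is e.-homog -> ~ I z -> (\rank A <= 2)%N ->
  exists A' z' e', [/\ (A <= A')%MS, (\rank A < \rank A')%N, Kill I A' z',
     z' \is e'.-homog & ~ I z'].
Proof.
move=> hA hz nz hr.
have [i ni] := unit_notin (leq_ltn_trans hr (isT : (2 < 4)%N)).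
set A1 := (A + ev i)%MS.
have hr1 : (\rank A1 < 4)%N by apply: leq_ltn_trans (rank_adds_le _ _) _.
have [i' ni'] := unit_notin hr1.
have [a [b [t [k [ab ht nt hI]]]]] :=
  bin HI Hh (lin_homog (ev i)) (lin_homog (ev i')) hz nz.
pose w : 'rV_4 := a *: ev i + b *: ev i'.
have lw : lin w = a *: lin (ev i) + b *: lin (ev i') by rewrite linD !linZ.
have nw : ~~ (w <= A)%MS.
  apply/negP => wA; case: (eqVneq b 0) => [b0|b0].
    move: ab; rewrite b0 eqxx orbF => a0.
    move/negP: ni; apply; have -> : ev i = a^-1 *: w :> 'rV_4.
      by rewrite /w b0 scale0r addr0 scalerA mulVf // scale1r.
    exact: scalemx_sub.
  move/negP: ni'; apply.
  have -> : ev i' = b^-1 *: (w - a *: ev i) :> 'rV_4.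
    by rewrite /w addrC addKr scalerA mulVf // scale1r.
  apply: scalemx_sub; apply: addmx_sub.
    by apply: submx_trans wA (addsmxSl _ _).
  by rewrite -scaleNr; apply: scalemx_sub; apply: addsmxSr.
exists (A + w)%MS, (t * z), (k + e)%N; split.
- exact: addsmxSl.
- exact: rank_adds_gt.
- by apply: kill_adds => //; [apply: kill_mul | rewrite lw].
- exact: dhomogM.
- exact: nt.
Qed.

Lemma point k : forall A z e, (3 - \rank A <= k)%N -> Kill I A z -> z \is e.-homog -> ~ I z ->
  exists A' z' e', [/\ (A <= A')%MS, \rank A' = 3%N, Kill I A' z',
     z' \is e'.-homog & ~ I z'].
Proof.
elim: k => [|k IH] A z e hk hA hz nz.
  exists A, z, e; split => //.
  have h3 : (3 <= \rank A)%N by rewrite -subn_eq0 -leqn0.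
  case: (ltngtP (\rank A) 3) => // h; first by move: h3; rewrite leqNgt h.
  exfalso; apply: nz; apply: (kill_full Hsat hA).
  by rewrite /row_full eqn_leq rank_le4 h.
case: (leqP 3 (\rank A)) => hr.
  by apply: (IH A z e) => //; rewrite (eqP (_ : 3 - \rank A == 0)%N) // subn_eq0.
have [A' [z' [e' [sA rA hA' hz' nz']]]] := point_step hA hz nz (hr : (\rank A <= 2)%N).
have hk' : (3 - \rank A' <= k)%N by move: hk rA; clear; lia.
have [A'' [z'' [e'' [sA' rA'' hA'' hz'' nz'']]]] := IH A' z' e' hk' hA' hz' nz'.
by exists A'', z'', e''; split => //; apply: submx_trans sA sA'.
Qed.

End PointSec.

Lemma avoid k (B : nat -> 'M[CC]_4) : (forall j, (j < k)%N -> (\rank (B j) <= 3)%N) ->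
  exists w : 'rV[CC]_4, w != 0 /\ forall j, (j < k)%N -> ~~ (w <= B j)%MS.
Proof.
move=> hB.
pose psi j : 'rV[CC]_4 :=
  epsilon (inhabits 0) (fun x : 'rV[CC]_4 => x != 0 /\ x *m (B j)^T = 0).
have hpsi : forall j, (j < k)%N -> psi j != 0 /\ psi j *m (B j)^T = 0.
  move=> j hj; apply: (epsilon_spec (inhabits (0 : 'rV[CC]_4)) (fun x : 'rV[CC]_4 => x != 0 /\ x *m (B j)^T = 0)).
  have : kermx (B j)^T != 0.
    rewrite kermx_eq0 /row_free mxrank_tr; apply/negP => /eqP e.
    by have := hB j hj; rewrite e.
  case/nonzero_row => i ni; exists (row i (kermx (B j)^T)); split => //.
  by rewrite -row_mul mulmx_ker row0.
pose P j : {poly CC} := \poly_(i < 4) psi j 0 (inord i).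
pose mom (t : CC) : 'rV[CC]_4 := \row_(i < 4) t ^+ i.
have Pt : forall j t, (j < k)%N -> (mom t <= B j)%MS -> (P j).[t] = 0.
  move=> j t hj /submxP [y ey].
  have : mom t *m (psi j)^T = 0.
    by rewrite ey -mulmxA -[B j]trmxK -trmx_mul (proj2 (hpsi j hj)) trmx0 mulmx0.
  move/matrixP => /(_ 0 0); rewrite !mxE => e; rewrite horner_poly -[RHS]e.
  apply: eq_bigr => i _; rewrite !mxE inord_val mulrC.
  done.
have P0 : forall j, (j < k)%N -> P j != 0.
  move=> j hj; have [nz _] := hpsi j hj; have [i ni] := nonzero_entry nz.
  apply/eqP => /(congr1 (fun q : {poly CC} => q`_i)).
  rewrite coef_poly ltn_ord inord_val coef0 => /eqP; exact/negP.
pose Q := \prod_(j < k) P j.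
have Q0 : Q != 0 by apply/prodf_neq0 => j _; apply: P0.
pose rs := [seq (i%:R : CC) | i <- iota 0 (size Q)].
have urs : uniq rs.
  rewrite map_inj_uniq ?iota_uniq // => a b /eqP.
  by rewrite Num.Theory.eqr_nat => /eqP.
have : ~~ all (root Q) rs.
  apply/negP => hall; have := max_poly_roots Q0 hall urs.
  by rewrite size_map size_iota ltnn.
case/allPn => t _ nt.
exists (mom t); split.
  apply/negP => /eqP /matrixP /(_ 0 0); rewrite !mxE expr0 => /eqP.
  by rewrite oner_eq0.
move=> j hj; apply/negP => hm; move: nt; rewrite /root /Q horner_prod.
rewrite (bigD1 (Ordinal hj)) //= Pt // mul0r eqxx.
by [].
Qed.

Section NZD.
Variable I : poly4 -> Prop.
Hypothesis HI : homog_ideal I.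
Hypothesis Hsat : saturated I.
Variable d0 : nat.
Hypothesis Hh : forall d, (d0 <= d)%N -> hilb I d 10.

Lemma lift_deg A z e D : Kill I A z -> \rank A = 3%N -> ~ I z -> z \is e.-homog ->
  (e <= D)%N -> exists z', [/\ Kill I A z', ~ I z' & z' \is D.-homog].
Proof.
move=> hA rA nz hz hD.
have [i ni] : exists i : 'I_4, ~~ (ev i <= A)%MS by apply: unit_notin; rewrite rA.
have hm : forall m, [/\ Kill I A (lin (ev i) ^+ m * z), ~ I (lin (ev i) ^+ m * z) &
                      lin (ev i) ^+ m * z \is (m + e).-homog].
  elim=> [|m [h1 h2 h3]]; first by rewrite expr0 mul1r.
  rewrite exprS -mulrA; split.
  - exact: kill_mul.
  - exact: (pt_prime HI Hsat h1 rA h2 ni).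
  - by have := dhomogM (lin_homog (ev i)) h3; rewrite add1n addSn.
have [h1 h2 h3] := hm (D - e)%N.
by exists (lin (ev i) ^+ (D - e) * z); split => //; rewrite subnK in h3.
Qed.

Lemma separation n (A : 'I_n -> 'M[CC]_4) (z : 'I_n -> poly4) :
  (forall i, Kill I (A i) (z i)) -> (forall i, \rank (A i) = 3%N) -> (forall i, ~ I (z i)) ->
  (forall i m, i != m -> ~~ (A m <= A i)%MS) ->
  forall c : 'I_n -> CC, I (\sum_j c j *: z j) -> forall i, c i = 0.
Proof.
move=> hA rA nz dA c hc i.
have : forall m, exists l : 'rV[CC]_4, (l <= A m)%MS /\ (m != i -> ~~ (l <= A i)%MS).
  move=> m; case: (eqVneq m i) => [->|mi].
    by exists 0; split => //; apply: sub0mx.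
  have : ~~ (A m <= A i)%MS by apply: dA; rewrite eq_sym.
  move=> nsub; apply/not_all_not_ex => h; move/negP: nsub; apply.
  apply/row_subP => r; apply/negPn/negP => nr.
  by apply: (h (row r (A m))); split => [|_]; [apply: row_sub | ].
case/fin_all_exists => l hl.
pose L := \prod_(m < n | m != i) lin (l m).
have h1 : I (L * \sum_j c j *: z j) by apply: (IM HI).
move: h1; rewrite mulr_sumr (bigD1 i) //= => h1.
have h2 : I (\sum_(j < n | j != i) L * (c j *: z j)).
  elim/big_rec: _ => [|j p ji hp]; first exact: (I0 HI).
  apply: ID => //; rewrite -scalerAr; apply: (IZ HI).
  rewrite /L (bigD1 j) //= -mulrA mulrCA; apply: (IM HI).
  by apply: (hA j); case: (hl j).
have h3 : I (c i *: (L * z i)).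
  by have := IB HI h1 h2; rewrite addrK scalerAr.
apply/eqP; apply/negPn/negP => ci; move: h3 => /(IZinv HI ci).
have : Kill I (A i) (L * z i) /\ ~ I (L * z i).
  rewrite /L; elim/big_rec: _ => [|m p mi [kp np]]; first by rewrite mul1r; split.
  rewrite -mulrA; split; first exact: kill_mul.
  by apply: (pt_prime HI Hsat kp (rA i) np); case: (hl m) => _; apply.
by case.
Qed.


Lemma nzd : exists w : 'rV[CC]_4, forall y e, y \is e.-homog -> I (lin w * y) -> I y.
Proof.
apply: NNPP => Hc.
have Hc' : forall w : 'rV[CC]_4, exists y e, [/\ y \is e.-homog, I (lin w * y) & ~ I y].
  move=> w; apply: NNPP => h; apply: Hc; exists w => y e hy hw.
  by apply: NNPP => ny; apply: h; exists y, e.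
have build : forall k, (k <= 11)%N -> exists (A : nat -> 'M[CC]_4) (z : nat -> poly4) (e : nat -> nat),
   forall i, (i < k)%N -> [/\ Kill I (A i) (z i), \rank (A i) = 3%N, ~ I (z i),
       z i \is (e i).-homog & forall j, (j < i)%N -> ~~ (A i <= A j)%MS].
  elim=> [|k IH] hk.
    by exists (fun _ => 0), (fun _ => 0), (fun _ => 0%N).
  have [A [z [e hAz]]] := IH (ltnW hk).
  have [w [w0 hw]] : exists w : 'rV[CC]_4, w != 0 /\ forall j, (j < k)%N -> ~~ (w <= A j)%MS.
    by apply: avoid => j hj; have [_ -> _ _ _] := hAz j hj.
  have [y [ey [hy hwy ny]]] := Hc' w.
  have kill0 : Kill I ((0 : 'M[CC]_4) + w)%MS y.
    apply: (kill_adds HI) => // x; rewrite submx0 => /eqP ->; rewrite lin0 mul0r; exact: (I0 HI).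
  have [A' [z' [e' [sA rA' hA' hz' nz']]]] :=
    point HI Hsat Hh (leq_subr (\rank ((0 : 'M[CC]_4) + w)%MS) 3) kill0 hy ny.
  exists (fun i => if i == k then A' else A i), (fun i => if i == k then z' else z i),
    (fun i => if i == k then e' else e i).
  move=> i; rewrite ltnS leq_eqVlt => /orP [/eqP ->|hi].
    rewrite eqxx; split => // j hj; rewrite (ltn_eqF hj).
    apply/negP => sub; move/negP: (hw j hj); apply; apply: submx_trans sub.
    by apply: submx_trans sA; exact: addsmxSr.
  rewrite (ltn_eqF hi); have [h1 h2 h3 h4 h5] := hAz i hi; split => // j hj.
  by rewrite (ltn_eqF (ltn_trans hj hi)); exact: h5.
have [A [z [e hAz]]] := build 11%N (leqnn _).
pose D := (d0 + \sum_(i < 11) e i)%N.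
have : forall i : 'I_11, exists z', [/\ Kill I (A i) z', ~ I z' & z' \is D.-homog].
  move=> i; have [h1 h2 h3 h4 _] := hAz i (ltn_ord i).
  apply: lift_deg h1 h2 h3 h4 _.
  by rewrite /D (bigD1 i) //= addnCA leq_addr.
case/fin_all_exists => z' hz'.
have hD : (d0 <= D)%N by apply: leq_addr.
have [c [[i0 ci0] hc]] := dep HI Hh (s := z') hD (isT : (10 < 11)%N)
   (fun i => let: And3 _ _ h := hz' i in h).
move/eqP: ci0; apply.
apply: (separation (A := fun i : 'I_11 => A i) (z := z')) hc i0.
- by move=> i; case: (hz' i).
- by move=> i; case: (hAz i (ltn_ord i)).
- by move=> i; case: (hz' i).
move=> i m im; case: (ltngtP i m) => [lt|gt|eq].
- by have [_ _ _ _ h5] := hAz m (ltn_ord m); apply: h5.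
- have [_ r1 _ _ h5] := hAz i (ltn_ord i); have := h5 m gt.
  have [_ r2 _ _ _] := hAz m (ltn_ord m).
  apply: contra => sub; have := (mxrank_leqif_eq sub).2.
  by rewrite r1 r2 eqxx => /esym /andP [].
- by move: im; rewrite (val_inj eq) eqxx.
Qed.

End NZD.

Lemma val_lin_sum d n (c : 'I_n -> CC) (b : 'I_n -> dhomog 4 CC d) :
  val (\sum_i c i *: b i) = \sum_i c i *: val (b i).
Proof.
by elim/big_rec2: _ => [|i y1 y2 _ <-] //.
Qed.

Lemma vs_basis d (U : {vspace dhomog 4 CC d}) n : \dim U = n ->
  exists b : 'I_n -> dhomog 4 CC d, (forall i, b i \in U) /\ lin_indep (fun i => val (b i)).
Proof.
move=> e; move: (vbasis U) (vbasisP U); rewrite e => X hX.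
exists (fun i => tnth X i); split.
  by move=> i; apply: (basis_mem hX); apply: mem_tnth.
move=> c hc; move/freeP: (basis_free hX) => hf; apply: hf.
apply: val_inj; rewrite val_lin_sum /=.
by rewrite -[RHS]hc; apply: eq_bigr => i _; rewrite (tnth_nth 0).
Qed.

Lemma free_size d (U : {vspace dhomog 4 CC d}) n (b : 'I_n -> dhomog 4 CC d) :
  (forall i, b i \in U) -> lin_indep (fun i => val (b i)) -> (n <= \dim U)%N.
Proof.
move=> hU hb; pose X := [tuple b i | i < n].
have fX : free X.
  apply/freeP => c hc i; apply: hb; rewrite -val_lin_sum.
  have -> : \sum_i c i *: b i = \sum_i c i *: X`_i.
    by apply: eq_bigr => j _; rewrite -tnth_nth tnth_mktuple.
  by rewrite hc.
have sX : (<<X>> <= U)%VS.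
  apply/span_subvP => x /tnthP [i ->]; rewrite tnth_mktuple; exact: hU.
by have := dimvS sX; rewrite (eqnP fX) size_tuple.
Qed.

Section CoordSec.
Variable I : poly4 -> Prop.
Hypothesis HI : homog_ideal I.
Variable g : 'I_10 -> poly4.
Hypothesis hg : forall i, g i \is 3.-homog.
Hypothesis hspan : forall p, p \is 3.-homog ->
  exists (c : 'I_10 -> CC) (q : poly4), I q /\ p = q + \sum_(i < 10) c i *: g i.
Hypothesis gind : forall c : 'I_10 -> CC, I (\sum_(i < 10) c i *: g i) -> forall i, c i = 0.

Definition cf (p : poly4) : 'rV[CC]_10 :=
  epsilon (inhabits 0) (fun c : 'rV[CC]_10 => I (p - \sum_j c 0 j *: g j)).

Lemma cf_spec p : (exists c : 'rV[CC]_10, I (p - \sum_j c 0 j *: g j)) ->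
  I (p - \sum_j (cf p) 0 j *: g j).
Proof. exact: (epsilon_spec (inhabits (0 : 'rV[CC]_10)) (fun c : 'rV[CC]_10 => I (p - \sum_j c 0 j *: g j))). Qed.

Lemma cf_ex p : p \is 3.-homog -> exists c : 'rV[CC]_10, I (p - \sum_j c 0 j *: g j).
Proof.
case/hspan => c [q [hq ->]]; exists (\row_j c j).
have -> : \sum_j (\row_j0 c j0) 0 j *: g j = \sum_j c j *: g j.
  by apply: eq_bigr => j _; rewrite mxE.
by rewrite addrK.
Qed.

Lemma cf_uniq p (c : 'rV[CC]_10) : I (p - \sum_j c 0 j *: g j) -> cf p = c.
Proof.
move=> h; have h1 := cf_spec (ex_intro _ c h).
have h2 := IB HI h h1.
have : I (\sum_j ((cf p) 0 j - c 0 j) *: g j).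
  move: h2; congr I.
  rewrite opprB addrC addrA subrK -sumrB; apply: eq_bigr => j _.
  by rewrite scalerBl.
move/gind => hz; apply/matrixP => i j; rewrite ord1.
by apply/eqP; rewrite -subr_eq0 hz.
Qed.

Definition phi (v : dhomog 4 CC 3) : 'rV[CC]_10 := cf (val v).

Lemma phi_lin : linear phi.
Proof.
move=> a u v; rewrite /phi; apply: cf_uniq.
have hu := cf_spec (cf_ex (dhomog_is_dhomog u)).
have hv := cf_spec (cf_ex (dhomog_is_dhomog v)).
have := ID HI (IZ HI a hu) hv; congr I.
have -> : \val (a *: u + v) = a *: \val u + \val v by [].
rewrite scalerBr.
under [X in _ = _ - X]eq_bigr => j _ do rewrite !mxE scalerDl -scalerA.
rewrite big_split /= -scaler_sumr.
by rewrite opprD addrACA.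
Qed.

End CoordSec.

Theorem lemma4p2 (f : poly4) (I : poly4 -> Prop) :
  f \is 4.-homog ->
  (* f is not apolar to any quadric: f^perp_2 = 0 *)
  (forall g : poly4, g \is 2.-homog -> apply_diff g f = 0 -> g = 0) ->
  (* I = I_Gamma for a scheme Gamma of length ten *)
  scheme_ideal_of_length I 10 ->
  (* Gamma is apolar to f: I_Gamma is contained in f^perp *)
  (forall g, I g -> apply_diff g f = 0) ->
  (* Gamma imposes independent conditions on cubics: h_Gamma(3) = 10,
     i.e. I_{Gamma,3} is 10-dimensional *)
  hilb I 3 10 /\ dim_deg I 3 10.
Proof.
move=> hf hperp [HI Hsat [d0 Hh]] hap.
have I2 : forall y, y \is 2.-homog -> I y -> y = 0.
  by move=> y hy hIy; apply: hperp hy (hap y hIy).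
have [w hw] := nzd HI Hsat Hh.
set lf := lin w.
have strip : forall m y e, y \is e.-homog -> I (lf ^+ m * y) -> I y.
  elim=> [|m IH] y e hy; first by rewrite expr0 mul1r.
  rewrite exprSr -mulrA => h; apply: (hw y e hy); apply: (IH _ (1 + e)%N) => //.
  exact: dhomogM (lin_homog w) hy.
have dep11 : forall s : 'I_11 -> poly4, (forall k, s k \is 3.-homog) ->
    exists c : 'I_11 -> CC, (exists i, c i != 0) /\ I (\sum_k c k *: s k).
  move=> s hs.
  have hs' : forall k, lf ^+ d0 * s k \is (d0 + 3).-homog.
    by move=> k; have := dhomogM (dhomogMn d0 (lin_homog w)) (hs k); rewrite mul1n.
  have [c [nz hc]] := dep HI Hh (leq_addr 3 d0) (isT : (10 < 11)%N) hs'.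
  exists c; split => //; apply: (strip d0 _ 3%N).
    by apply: rpred_sum => k _; apply: rpredZ; apply: hs.
  move: hc; congr I; rewrite mulr_sumr; apply: eq_bigr => k _; by rewrite scalerAr.
have [B2 [_ hB2]] : exists b : 'I_10 -> dhomog 4 CC 2,
    (forall i, b i \in (fullv : {vspace dhomog 4 CC 2})) /\ lin_indep (fun i => val (b i)).
  by apply: vs_basis; rewrite dimvf /dim.
pose g := fun j => lf * val (B2 j).
have hg : forall j, g j \is 3.-homog.
  by move=> j; exact: (dhomogM (lin_homog w) (dhomog_is_dhomog (B2 j))).
have gind : forall c : 'I_10 -> CC, I (\sum_(i < 10) c i *: g i) -> forall i, c i = 0.
  move=> c hc; apply: hB2; apply: I2.
    by apply: rpred_sum => k _; apply: rpredZ; apply: dhomog_is_dhomog.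
  apply: (hw _ 2%N).
    by apply: rpred_sum => k _; apply: rpredZ; apply: dhomog_is_dhomog.
  move: hc; congr I; rewrite mulr_sumr; apply: eq_bigr => j _; by rewrite /g scalerAr.
have hspan : forall p, p \is 3.-homog ->
    exists (c : 'I_10 -> CC) (q : poly4), I q /\ p = q + \sum_(i < 10) c i *: g i.
  move=> p hp.
  pose s := fun k : 'I_11 => if unlift ord0 k is Some j then g j else p.
  have hs : forall k, s k \is 3.-homog by move=> k; rewrite /s; case: (unlift _ _) => [j|]; [apply: hg | apply: hp].
  have [c [[i0 ci0] hc]] := dep11 s hs.
  move: hc; rewrite big_ord_recl /s unlift_none.
  under eq_bigr => i _ do rewrite liftK.
  set c0 := c ord0 => hc.
  case: (eqVneq c0 0) => [c00|c0n].
    exfalso.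
    have hrel : I (\sum_i c (lift ord0 i) *: g i) by move: hc; rewrite c00 scale0r add0r.
    have h := gind _ hrel.
    move/eqP: ci0; apply; case: (unliftP ord0 i0) => [j ->|->]; [exact: h | exact: c00].
  exists (fun i => - (c0^-1 * c (lift ord0 i))),
    (c0^-1 *: (c0 *: p + \sum_i c (lift ord0 i) *: g i)).
  split; first exact: (IZ HI).
  rewrite scalerDr scalerA mulVf // scale1r scaler_sumr -addrA -big_split /=.
  rewrite big1 ?addr0 // => i _.
  by rewrite scalerA scaleNr addrN.
have hil : hilb I 3 10 by exists g; split.
split => //.
pose V3 := dhomog 4 CC 3.
pose phiL : {linear V3 -> 'rV[CC]_10} :=
  HB.pack (phi I g) (GRing.isLinear.Build CC V3 'rV[CC]_10 *:%R (phi I g) (phi_lin HI hspan gind)).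
pose F := linfun phiL.
have e0 : \sum_j (0 : 'rV[CC]_10) 0 j *: g j = 0.
  by rewrite big1 // => j _; rewrite mxE scale0r.
have kerE : forall v : V3, (v \in lker F) <-> I (val v).
  move=> v; rewrite memv_ker lfunE /=; split => [/eqP h|h].
    by have := cf_spec (cf_ex hspan (dhomog_is_dhomog v)); rewrite /phi in h; rewrite h e0 subr0.
  by apply/eqP; apply: (cf_uniq HI gind); rewrite e0 subr0.
have dimF : \dim (lker F) = 10%N.
  have := limg_ker_dim F fullv; rewrite capfv.
  have -> : \dim (F @: fullv) = 10%N.
    apply/eqP; rewrite eqn_leq; apply/andP; split.
      by have := dimvS (subvf (F @: fullv)); rewrite dimvf /dim.
    have : (fullv <= F @: fullv)%VS.
      apply/subvP => c _.
      have hc : (\sum_j c 0 j *: g j) \is 3.-homog.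
        by apply: rpred_sum => k _; apply: rpredZ; apply: hg.
      have -> : c = F (DHomog hc).
        rewrite lfunE /=; symmetry; apply: (cf_uniq HI gind) => /=.
        by rewrite subrr; apply: (I0 HI).
      by apply: memv_img; apply: memvf.
    by move/dimvS; rewrite dimvf /dim.
  rewrite dimvf /dim /= => /eqP; rewrite (_ : 'C(3 + 3, 3) = 10 + 10)%N // eqn_add2r.
  by move/eqP.
split.
  have [b [hbU hbi]] := vs_basis dimF.
  exists (fun i => val (b i)); split => // i; split; [by apply/kerE; apply: hbU | by case: (b i)].
move=> v hv hind.
have hin : forall i, DHomog (proj2 (hv i)) \in lker F.
  by move=> i; apply/kerE; exact: (proj1 (hv i)).
by have := free_size hin hind; rewrite dimF.
Qed.
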